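(* Let $m \ge 2$ and let $S_1,\dots,S_m$ be mutually independent nonnegative random variables (the ranking scores), each having a probability density function on $[0,\infty)$ and a finite first moment. For each $j$, let $r_j \in \{1,\dots,m\}$ be the rank of $S_j$ among $S_1,\dots,S_m$ in decreasing order, i.e. $r_j = 1 + \#\{\ell \ne j : S_\ell > S_j\}$ (ties occur with probability zero). Then for any $i \in \{1,\dots,m-1\}$ and any $k \in \{1,\dots,m-1\}$ with $\mathrm{P}(r_i = k) > 0$ and $\mathrm{P}(r_i = k+1) > 0$, $$\mathbb{E}[S_i \mid r_i = k] \ \ge\ \mathbb{E}[S_i \mid r_i = k+1].$$ *)

(* Defs.v *)
From HB Require Import structures.
From mathcomp Require Import all_boot all_order all_algebra.
From mathcomp Require Import all_classical all_reals all_analysis.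
Set Implicit Arguments. Unset Strict Implicit. Unset Printing Implicit Defensive.
Import Order.TTheory GRing.Theory Num.Theory.
Local Open Scope classical_set_scope.
Local Open Scope ring_scope.

(* Mutual independence of a finite family of real random variables:
   product rule for every family of Borel sets (taking B j = setT recovers
   every subfamily). *)
Definition mutually_independent d (T : measurableType d) (R : realType)
  (P : probability T R) (m : nat) (S : 'I_m -> T -> R) : Prop :=
  forall B : 'I_m -> set R, (forall j, measurable (B j)) ->
    P (\bigcap_(j in [set: 'I_m]) (S j @^-1` B j)) =
    (\prod_(j < m) P (S j @^-1` B j))%E.

Definition has_density_on_nonneg d (T : measurableType d) (R : realType)
  (P : probability T R) (X : T -> R) : Prop :=
  exists f : R -> R, measurable_fun setT f /\ (forall x, 0 <= f x) /\
    forall A : set R, measurable A ->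
      P (X @^-1` A) = (\int[lebesgue_measure]_(x in A `&` [set x : R | (0 <= x)%R]) (f x)%:E)%E.

Definition rank (T : Type) (R : realType) (m : nat) (S : 'I_m -> T -> R)
  (j : 'I_m) (t : T) : nat :=
  1 + #|[set l : 'I_m | (l != j) && (S j t < S l t)]|.

Definition cond_exp_event d (T : measurableType d) (R : realType)
  (P : probability T R) (X : T -> R) (A : set T) : R :=
  fine (\int[P]_(t in A) (X t)%:E)%E / fine (P A).

(* Main.v *)
Require Import Defs.
From HB Require Import structures.
From mathcomp Require Import all_boot all_order all_algebra.
From mathcomp Require Import all_classical all_reals all_analysis.
From mathcomp Require Import measurable_realfun.
From mathcomp Require Import ring lra.
Import Order.TTheory GRing.Theory Num.Theory.
Local Open Scope classical_set_scope.
Local Open Scope ring_scope.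

Section PB.
Variable R : realFieldType.

Definition prv (f : nat -> R) (j : nat) : R := if j is j'.+1 then f j' else 0.

Fixpoint pb (ps : seq R) (j : nat) : R :=
  match ps with
  | [::] => (j == 0%N)%:R
  | p :: ps' => (1 - p) * pb ps' j + p * (if j is j'.+1 then pb ps' j' else 0)
  end.

Lemma pbS p ps j : pb (p :: ps) j = (1 - p) * pb ps j + p * prv (pb ps) j.
Proof. by []. Qed.

Lemma pb_ge0 ps j : all (fun p => 0 <= p <= 1) ps -> 0 <= pb ps j.
Proof.
elim: ps j => [|p ps IH] j /=; first by case: (j == 0%N).
case/andP=> /andP[p0 p1] hps.
apply: addr_ge0; apply: mulr_ge0; rewrite ?subr_ge0 ?IH //.
by case: j => [|j] //; rewrite IH.
Qed.

Lemma prv_ge0 f j : (forall x, 0 <= f x) -> 0 <= prv f j.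
Proof. by case: j => //= j ->. Qed.

Lemma pb_tp2 (zs : seq (R * R)) :
  all (fun z => (0 <= z.2) && (z.2 <= z.1) && (z.1 <= 1)) zs ->
  forall i j e, (i <= j)%N ->
  pb (map snd zs) (j + e)%N * pb (map fst zs) i <=
  pb (map snd zs) j * pb (map fst zs) (i + e)%N.
Proof.
elim: zs => [|[p q] zs IH].
  move=> _ i j e hij /=.
  case: j hij => [|j]; case: i => [|i] //= _; case: e => [|e] //=;
  rewrite ?mul0r ?mulr0 ?mulr1 ?mul1r //.
move=> /andP[hz hzs]; move: hz => /= /andP[/andP[q0 qp] p1].
have hb : forall x, 0 <= pb (map snd zs) x.
  move=> x; apply: pb_ge0; rewrite all_map; apply/allP => z zin /=.
  have /andP[/andP[z0 z21] z1] := allP hzs z zin; rewrite z0 /=.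
  exact: le_trans z1.
have ha : forall x, 0 <= pb (map fst zs) x.
  move=> x; apply: pb_ge0; rewrite all_map; apply/allP => z zin /=.
  have /andP[/andP[z0 z21] z1] := allP hzs z zin; rewrite z1 andbT.
  exact: le_trans z21.
have IH' := IH hzs.
move=> i j e hij.
change (pb (q :: map snd zs) (j + e)%N * pb (p :: map fst zs) i <=
  pb (q :: map snd zs) j * pb (p :: map fst zs) (i + e)%N).
rewrite !pbS.
move: ha hb IH'; set b := pb (map snd zs); set a := pb (map fst zs) => ha hb IH'.
have hT2 : 0 <= prv b j * prv a (i + e)%N - prv b (j + e)%N * prv a i.
  case: i hij => [|i] hij /=.
    by rewrite mulr0 subr0 mulr_ge0 // prv_ge0.
  case: j hij => [|j] // hij; rewrite subr_ge0 addSn.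
  by rewrite /= IH'.
have hT3 : 0 <= b j * prv a (i + e)%N - b (j + e)%N * prv a i.
  case: i hij {hT2} => [|i] hij /=.
    by rewrite mulr0 subr0 mulr_ge0 // prv_ge0.
  rewrite subr_ge0 IH' //; exact: ltnW.
have hT1 : 0 <= b j * a (i + e)%N - b (j + e)%N * a i by rewrite subr_ge0 IH'.
have pq0 : 0 <= p - q by rewrite subr_ge0.
have q1 : 0 <= 1 - q by rewrite subr_ge0 (le_trans qp).
have p1' : 0 <= 1 - p by rewrite subr_ge0.
have p0 : 0 <= p by apply: le_trans qp.
move: hT1 hT2 hT3.
set T1 := b j * a (i + e)%N - b (j + e)%N * a i.
set T2 := prv b j * prv a (i + e)%N - prv b (j + e)%N * prv a i.
set T3 := b j * prv a (i + e)%N - b (j + e)%N * prv a i.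
move=> hT1 hT2 hT3.
rewrite -subr_ge0.
have -> : ((1 - q) * b j + q * prv b j) * ((1 - p) * a (i + e)%N + p * prv a (i + e)%N) -
  ((1 - q) * b (j + e)%N + q * prv b (j + e)%N) * ((1 - p) * a i + p * prv a i) =
  (1 - q) * (1 - p) * T1 + q * p * T2 + (1 - q) * p * T3 +
  q * (1 - p) * (prv b j * a (i + e)%N - prv b (j + e)%N * a i).
  by rewrite /T1 /T2 /T3; ring.
case: (ltngtP i j) hij => // [ltij|eqij] _.
  have hT4 : 0 <= prv b j * a (i + e)%N - prv b (j + e)%N * a i.
    case: j ltij {T1 T2 T3 hT1 hT2 hT3} => [|j] ltij //=.
    by rewrite subr_ge0 IH'.
  apply: addr_ge0; [apply: addr_ge0; [apply: addr_ge0|]|];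
    by apply: mulr_ge0 => //; apply: mulr_ge0.
subst j.
have hT34 : 0 <= T3 + (prv b i * a (i + e)%N - prv b (i + e)%N * a i).
  rewrite /T3; clear T1 T2 T3 hT1 hT2 hT3; case: e => [|e].
    by rewrite !addn0 !subrr addr0.
  have -> : b i * prv a (i + e.+1)%N - b (i + e.+1)%N * prv a i +
    (prv b i * a (i + e.+1)%N - prv b (i + e.+1)%N * a i) =
    (b i * a (i + e)%N - b (i + e)%N * a i) +
    (prv b i * a (i + e.+1)%N - b (i + e.+1)%N * prv a i).
    by rewrite addnS /=; ring.
  apply: addr_ge0; first by rewrite subr_ge0 IH'.
  case: i => [|i] /=; first by rewrite !mul0r mulr0 subrr.
  by rewrite subr_ge0 addSnnS IH'.
move: hT34; set T4 := (prv b i * a (i + e)%N - prv b (i + e)%N * a i) => hT34.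
have -> : (1 - q) * (1 - p) * T1 + q * p * T2 + (1 - q) * p * T3 + q * (1 - p) * T4
  = (1 - q) * (1 - p) * T1 + q * p * T2 + (p - q) * T3 + q * (1 - p) * (T3 + T4).
  by ring.
apply: addr_ge0; [apply: addr_ge0; [apply: addr_ge0|]|];
  by apply: mulr_ge0 => //; apply: mulr_ge0.
Qed.

End PB.
Arguments pb {R}.
Arguments prv {R}.

Section Main.
Context d (T : measurableType d) (R : realType) (P : probability T R) (m : nat)
  (S : 'I_m -> T -> R).
Hypothesis Smeas : forall j, measurable_fun setT (S j).
Hypothesis Sindep : mutually_independent P S.

Definition Grect (J : pred 'I_m) : set (set T) :=
  [set E | exists B : 'I_m -> set R, (forall j, measurable (B j)) /\
     (forall j, ~~ J j -> B j = setT) /\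
     E = \bigcap_(j in [set: 'I_m]) (S j @^-1` B j)].

Lemma Grect_meas J E : Grect J E -> measurable E.
Proof.
move=> [B [mB [_ ->]]]; apply: fin_bigcap_measurable.
  exact: finite_finset.
move=> j _; rewrite -[X in measurable X]setTI; exact: Smeas.
Qed.

Lemma GrectT J : Grect J setT.
Proof.
exists (fun=> setT); split=> //; split=> //.
by apply/seteqP; split=> // x _ j _.
Qed.

Lemma GrectI J : setI_closed (Grect J).
Proof.
move=> _ _ [B1 [mB1 [h1 ->]]] [B2 [mB2 [h2 ->]]].
exists (fun j => B1 j `&` B2 j); split; first by move=> j; exact: measurableI.
split; first by move=> j hj; rewrite h1 // h2 // setIT.
apply/seteqP; split=> x /=.
  by move=> [h1x h2x] j _; split; [exact: h1x|exact: h2x].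
by move=> h; split=> j _; have [] := h j I.
Qed.

Lemma Grect_pre (J : pred 'I_m) l (A : set R) : J l -> measurable A -> Grect J (S l @^-1` A).
Proof.
move=> Jl mA; exists (fun j => if j == l then A else setT); split.
  by move=> j; case: ifP.
split; first by move=> j hj; case: eqP => // ejl; rewrite ejl Jl in hj.
apply/seteqP; split=> x /=.
  by move=> hx j _; case: eqP => // ->.
by move=> /(_ l I); rewrite eqxx.
Qed.


Lemma indep_rect (l : 'I_m) (A : set R) E : measurable A ->
  Grect (fun j => j != l) E ->
  P (S l @^-1` A `&` E) = (P (S l @^-1` A) * P E)%E.
Proof.
move=> mA [B [mB [hB ->]]].
have Bl : B l = setT by apply: hB; rewrite eqxx.
pose B' j := if j == l then A else B j.
have mB' j : measurable (B' j) by rewrite /B'; case: ifP.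
have -> : S l @^-1` A `&` \bigcap_(j in [set: 'I_m]) S j @^-1` B j =
    \bigcap_(j in [set: 'I_m]) S j @^-1` B' j.
  apply/seteqP; split=> x /=.
    move=> [hA hb] j _; rewrite /B'; case: eqP => [->//|_]; exact: hb.
  move=> h; split; first by have := h l I; rewrite /B' eqxx.
  move=> j _; have := h j I; rewrite /B'; case: eqP => [->|//].
  by rewrite Bl.
rewrite !Sindep //.
rewrite (bigD1 l) //= [X in (_ = _ * X)%E](bigD1 l) //= {1}/B' eqxx Bl preimage_setT.
rewrite probability_setT mul1e; congr (_ * _)%E.
by apply: eq_bigr => j /negbTE jl; rewrite /B' jl.
Qed.

Lemma indep_sigma (l : 'I_m) (A : set R) E : measurable A ->
  <<s Grect (fun j => j != l) >> E ->
  P (S l @^-1` A `&` E) = (P (S l @^-1` A) * P E)%E.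
Proof.
move=> mA sE.
have mD : measurable (S l @^-1` A) by rewrite -[X in measurable X]setTI; exact: Smeas.
have PDfin : (P (S l @^-1` A)) \is a fin_num.
  by rewrite ge0_fin_numE // (le_lt_trans (probability_le1 _ _)) ?ltry.
have PD0 : (0 <= fine (P (S l @^-1` A)))%R by apply: fine_ge0.
pose c : {nonneg R} := NngNum PD0.
have H : mrestr P mD E = mscale c P E.
  apply: (@g_sigma_algebra_measure_unique _ R T (Grect (fun j => j != l))
    (@Grect_meas _) (fun=> setT) (fun=> GrectT _) _ (mrestr P mD) (mscale c P)
    (@GrectI _) _ _ E sE).
  - by apply/seteqP; split=> // x _; exists 0%N.
  - move=> B GB.
    change (P (B `&` S l @^-1` A) = (fine (P (S l @^-1` A)))%:E * P B)%E.
    by rewrite fineK // setIC indep_rect.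
  - move=> ?; change (P (setT `&` S l @^-1` A) < +oo)%E.
    by rewrite setTI (le_lt_trans (probability_le1 _ mD)) ?ltry.
move: H.
change (P (E `&` S l @^-1` A) = (fine (P (S l @^-1` A)))%:E * P E ->
  P (S l @^-1` A `&` E) = (P (S l @^-1` A) * P E))%E.
by rewrite fineK // setIC.
Qed.

Lemma count_meas d' (X : measurableType d') (e : 'I_m -> X -> bool)
    (L : seq 'I_m) j :
  (forall l, l \in L -> measurable [set x | e l x]) ->
  measurable [set x | count (fun l => e l x) L = j].
Proof.
elim: L j => [|l L IH] j hL /=.
  case: j => [|j].
    by rewrite (_ : [set x | 0%N = 0%N] = setT) //; apply/seteqP; split.
  by rewrite (_ : [set x : X | 0%N = j.+1] = set0) //; apply/seteqP; split.
have hL' : forall l', l' \in L -> measurable [set x | e l' x].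
  by move=> l' hl'; apply: hL; rewrite in_cons hl' orbT.
have hl : measurable [set x | e l x] by apply: hL; rewrite in_cons eqxx.
rewrite (_ : [set x | (e l x + count (fun l => e l x) L)%N = j] =
  ([set x | e l x] `&` [set x | (count (fun l => e l x) L).+1 = j]) `|`
  (~` [set x | e l x] `&` [set x | count (fun l => e l x) L = j])).
  apply: measurableU; apply: measurableI.
  - exact: hl.
  - case: j => [|j].
      by rewrite (_ : [set x | _.+1 = 0%N] = set0) //; apply/seteqP; split.
    rewrite (_ : [set x | _.+1 = j.+1] = [set x | count (fun l => e l x) L = j]).
      exact: IH.
    by apply/seteqP; split=> x /=; [case|move=> ->].
  - exact: measurableC.
  - exact: IH.
apply/seteqP; split=> x /=.
  by case: (e l x) => /= h; [left|right].
by case: (e l x) => /= -[[]|[]].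
Qed.

Definition cnt (L : seq 'I_m) (s : R) (w : T) := count (fun l => s < S l w) L.

Lemma cnt_sigma (J : pred 'I_m) L s j : all J L ->
  <<s Grect J >> [set w | cnt L s w = j].
Proof.
move=> hJ.
apply: (@count_meas _ (g_sigma_algebraType (Grect J)) (fun l w => s < S l w) L j).
move=> l lL; apply: sub_sigma_algebra.
rewrite (_ : [set x | s < S l x] = S l @^-1` `]s, +oo[%classic).
  apply: Grect_pre; first exact: (allP hJ).
  exact: measurable_itv.
by apply/seteqP; split=> x /=; rewrite in_itv /= andbT.
Qed.

Lemma cnt_meas L s j : measurable [set w | cnt L s w = j].
Proof.
apply: count_meas => l _.
rewrite (_ : [set x | s < S l x] = S l @^-1` `]s, +oo[%classic).
  by rewrite -[X in measurable X]setTI; apply: Smeas => //; exact: measurable_itv.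
by apply/seteqP; split=> x /=; rewrite in_itv /= andbT.
Qed.

Definition pS (s : R) (l : 'I_m) := fine (P [set w | s < S l w]).

Lemma preS_itv l s : [set w | s < S l w] = S l @^-1` `]s, +oo[%classic.
Proof. by apply/seteqP; split=> x /=; rewrite in_itv /= andbT. Qed.

Lemma P_fin (A : set T) : measurable A -> P A \is a fin_num.
Proof. by move=> mA; rewrite ge0_fin_numE // (le_lt_trans (probability_le1 _ mA)) ?ltry. Qed.

Lemma cnt_prob L s j : uniq L ->
  P [set w | cnt L s w = j] = (pb [seq pS s l | l <- L] j)%:E.
Proof.
elim: L j => [|l L IH] j.
  move=> _ /=; case: j => [|j] /=.
    rewrite (_ : [set w | cnt [::] s w = 0%N] = setT) ?probability_setT //.
    by apply/seteqP; split.
  rewrite (_ : [set w | cnt [::] s w = j.+1] = set0) ?measure0 //.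
  by apply/seteqP; split.
move=> /= /andP[lL uL].
have allL : all (fun x => x != l) L.
  by apply/allP=> x xL; apply/eqP => xl; rewrite -xl xL in lL.
pose A := [set w | s < S l w].
have mA : measurable A by rewrite /A preS_itv -[X in measurable X]setTI; apply: Smeas => //; exact: measurable_itv.
have PA : P A = (pS s l)%:E by rewrite /pS fineK //; exact: P_fin.
have PAc : P (~` A) = (1 - pS s l)%:E by rewrite probability_setC // PA.
have hAc : ~` A = S l @^-1` (~` `]s, +oo[%classic) by rewrite /A preS_itv preimage_setC.
have E : [set w | cnt (l :: L) s w = j] =
    (A `&` [set w | (cnt L s w).+1 = j]) `|` (~` A `&` [set w | cnt L s w = j]).
  apply/seteqP; split=> x; rewrite /cnt /A /=.
    by case: (s < S l x) => /= h; [left|right].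
  by case: (s < S l x) => /= -[[]|[]].
have mE0 : measurable [set w | cnt L s w = j] by exact: cnt_meas.
have mE1 : measurable [set w | (cnt L s w).+1 = j].
  case: j {E mE0} => [|j].
    by rewrite (_ : [set w | _.+1 = 0%N] = set0) //; apply/seteqP; split.
  rewrite (_ : [set w | _.+1 = j.+1] = [set w | cnt L s w = j]).
    exact: cnt_meas.
  by apply/seteqP; split=> x /=; [case|move=> ->].
rewrite E measureU //; first last.
- apply/seteqP; split=> x //= [[h1 _] [h2 _]]; exact: h2.
- by apply: measurableI => //; exact: measurableC.
- exact: measurableI.
have H1 : P (A `&` [set w | (cnt L s w).+1 = j]) =
    (pS s l * prv (pb [seq pS s l | l <- L]) j)%:E.
  case: j {E mE0 mE1} => [|j].
    rewrite (_ : [set w | _.+1 = 0%N] = set0) ?setI0 ?measure0 /= ?mulr0 //.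
    by apply/seteqP; split.
  rewrite (_ : [set w | _.+1 = j.+1] = [set w | cnt L s w = j]); last first.
    by apply/seteqP; split=> x /=; [case|move=> ->].
  rewrite {1}/A preS_itv indep_sigma //; try exact: cnt_sigma.
  by rewrite -preS_itv -/A PA IH.
have H2 : P (~` A `&` [set w | cnt L s w = j]) = ((1 - pS s l) * pb [seq pS s l | l <- L] j)%:E.
  rewrite hAc indep_sigma //; try exact: cnt_sigma;
    try (apply: measurableC; exact: measurable_itv).
  by rewrite -hAc PAc IH.
rewrite [in RHS]EFinD [in RHS]addeC.
congr (_ + _)%E; [exact: H1|exact: H2].
Qed.

Lemma eqind_indic (U : Type) (f : U -> nat) k x :
  (((f x == k)%:R)%:E : \bar R) = (\1_[set y | f y = k] x)%:E.
Proof.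
rewrite indicE; case: (f x =P k) => h.
  by rewrite mem_set.
by rewrite memNset.
Qed.

Variable i : 'I_m.

Let G := Grect (fun j => j != i).
Let T' := g_sigma_algebraType G.

Lemma sGm : <<s G >> `<=` @measurable _ T.
Proof. exact: (smallest_sub (@sigma_algebra_measurable _ T) (@Grect_meas _)). Qed.

Let idT' (w : T) : T' := w.

Lemma idT'_meas : measurable_fun setT idT'.
Proof. by move=> _ B mB; rewrite setTI; exact: sGm. Qed.

Let idm : {mfun T >-> T'} := HB.pack idT' (isMeasurableFun.Build _ _ _ _ idT' idT'_meas).

Let P' := distribution P idm.

Lemma S'_meas l : l != i -> measurable_fun (setT : set T') (S l : T' -> R).
Proof.
move=> li _ B mB; rewrite setTI; apply: sub_sigma_algebra.
by apply: Grect_pre.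
Qed.

Let Jm (w : T) : (R * T')%type := (S i w, idT' w).

Lemma Jm_meas : measurable_fun setT Jm.
Proof. exact: measurable_fun_pair (Smeas i) idT'_meas. Qed.

Let Jmf : {mfun T >-> (R * T')%type} := HB.pack Jm (isMeasurableFun.Build _ _ _ _ Jm Jm_meas).

Let Sim : {mfun T >-> R} := HB.pack (S i) (isMeasurableFun.Build _ _ _ _ (S i) (Smeas i)).

Let mu := distribution P Sim.

Let law := distribution P Jmf.

Lemma law_prod X : measurable X -> ((mu \x P')%E X = law X).
Proof.
apply: product_measure_unique => A B mA mB.
change (P (Jm @^-1` (A `*` B)) = P (S i @^-1` A) * P (idT' @^-1` B))%E.
rewrite (_ : Jm @^-1` (A `*` B) = S i @^-1` A `&` B); last by apply/seteqP; split.
by rewrite indep_sigma.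
Qed.

Definition O := [seq l <- enum 'I_m | l != i].

Lemma allO : all (fun j => j != i) O.
Proof. by apply/allP => x; rewrite mem_filter => /andP[]. Qed.

Lemma uniqO : uniq O.
Proof. by rewrite filter_uniq // enum_uniq. Qed.

Lemma Ek_meas k : measurable [set x : (R * T')%type | cnt O x.1 x.2 = k].
Proof.
apply: (@count_meas _ _ (fun l (x : (R * T')%type) => x.1 < S l x.2)).
move=> l lO; have li : l != i := allP allO l lO.
have mf : measurable_fun setT (fun x : (R * T')%type => S l x.2 - x.1).
  apply: measurable_funB; last exact: measurable_fst.
  exact: measurableT_comp (S'_meas l li) measurable_snd.
rewrite (_ : [set x | x.1 < S l x.2] =
   setT `&` (fun x : (R * T')%type => S l x.2 - x.1) @^-1` `]0, +oo[%classic).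
  exact: mf measurableT _ (measurable_itv _).
by apply/seteqP; split=> x /=; rewrite in_itv /= andbT subr_gt0 //; case.
Qed.

Definition gg k (s : R) := fine (P [set v | cnt O s v = k]).

Lemma inner_int (phi : R -> R) k s : (0 <= phi s) ->
  (\int[P']_y ((phi s * \1_[set x : (R * T')%type | cnt O x.1 x.2 = k] (s, y))%R)%:E =
  ((phi s * gg k s)%R)%:E)%E.
Proof.
move=> phi0.
pose Es := [set y : T' | cnt O s y = k].
have mEs : measurable Es by exact: (@cnt_sigma (fun j => j != i) O s k allO).
transitivity (\int[P']_y ((phi s)%:E * (\1_Es y)%:E))%E.
  by apply: eq_integral => y _; rewrite EFinM.
rewrite ge0_integralZl_EFin //; try (by move=> y _; rewrite lee_fin);
  try (exact/measurable_EFinP/measurable_indic).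
rewrite integral_indic // setIT EFinM; congr (_ * _)%E.
change (P Es = (gg k s)%:E).
by rewrite /gg fineK //; apply: P_fin; exact: cnt_meas.
Qed.

Lemma transfer (phi : R -> R) k : measurable_fun setT phi -> (forall x, 0 <= phi x) ->
  (\int[P]_w ((phi (S i w) * \1_[set w | cnt O (S i w) w = k] w)%R)%:E =
  \int[P]_w ((phi (S i w) * gg k (S i w))%R)%:E)%E.
Proof.
move=> mphi phi0.
pose E := [set x : (R * T')%type | cnt O x.1 x.2 = k].
pose F := fun x : (R * T')%type => ((phi x.1 * \1_E x)%R)%:E.
have mF : measurable_fun setT F.
  apply/measurable_EFinP; apply: measurable_funM.
    exact: measurableT_comp mphi measurable_fst.
  exact: measurable_indic (Ek_meas k).
have F0 : forall x, (0 <= F x)%E by move=> x; rewrite lee_fin mulr_ge0.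
transitivity (\int[P]_(w in Jm @^-1` setT) (F \o Jm) w)%E.
  by rewrite preimage_setT; apply: eq_integral => w _.
rewrite -(@ge0_integral_pushforward _ _ T (R * T')%type R Jm Jm_meas P setT F) //; try (by move=> x _; exact: F0).
transitivity (\int[(mu \x P')%E]_x F x)%E.
  apply: eq_measure_integral; try exact: Jm_meas.
  by move=> h X mX _; symmetry; exact (law_prod X mX).
rewrite (fubini_tonelli1 F mF F0).
rewrite (@ge0_integral_pushforward _ _ T R R (S i) (Smeas i) P setT) //;
  try (exact: measurable_fun_fubini_tonelli_F);
  try (by move=> x _; apply: integral_ge0 => y _; exact: F0).
rewrite preimage_setT; apply: eq_integral => w _ /=.
by rewrite /fubini_F /F inner_int.
Qed.

Lemma gg_pb k s : gg k s = pb [seq pS s l | l <- O] k.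
Proof. by rewrite /gg cnt_prob // uniqO. Qed.

Lemma pS_ge0 s l : 0 <= pS s l.
Proof. exact: fine_ge0. Qed.

Lemma preS_meas s l : measurable [set w | s < S l w].
Proof. by rewrite preS_itv -[X in measurable X]setTI; apply: Smeas => //; exact: measurable_itv. Qed.

Lemma pS_le1 s l : pS s l <= 1.
Proof.
rewrite /pS -lee_fin fineK; last exact: P_fin (preS_meas _ _).
exact: probability_le1 (preS_meas _ _).
Qed.

Lemma pS_mono t s l : t <= s -> pS s l <= pS t l.
Proof.
move=> ts; rewrite /pS -lee_fin !fineK; try exact: P_fin (preS_meas _ _).
apply: le_measure; rewrite ?inE; try exact: preS_meas.
by move=> w /= h; exact: le_lt_trans h.
Qed.

Lemma gg_tp2 k t s : t <= s ->
  gg k.+1 s * gg k t <= gg k s * gg k.+1 t.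
Proof.
move=> ts.
have := @pb_tp2 R [seq (pS t l, pS s l) | l <- O] _ k k 1 (leqnn k).
rewrite -!map_comp /comp /= !addn1 -!gg_pb; apply.
apply/allP => z /mapP [l _ ->] /=.
by rewrite pS_ge0 pS_mono //= pS_le1.
Qed.

Lemma gg_meas k : measurable_fun setT (gg k).
Proof.
pose E := [set x : (R * T')%type | cnt O x.1 x.2 = k].
pose F := fun x : (R * T')%type => (((1 : R) * \1_E x)%R)%:E.
have mF : measurable_fun setT F.
  apply/measurable_EFinP; apply: measurable_funM => //.
  exact: measurable_indic (Ek_meas k).
have F0 : forall x, (0 <= F x)%E by move=> x; rewrite lee_fin mulr_ge0.
have := @measurable_fun_fubini_tonelli_F _ _ _ _ _ P' F mF F0.
rewrite (_ : fubini_F P' F = EFin \o gg k).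
  by move/measurable_EFinP.
apply/funext => s /=; rewrite /fubini_F /F.
by rewrite (inner_int (fun=> 1)) // mul1r.
Qed.


Lemma prod_int (h h' : T -> R) : measurable_fun setT h -> measurable_fun setT h' ->
  (forall w, 0 <= h w) -> (forall w, 0 <= h' w) ->
  (\int[P \x P]_z ((h z.1 * h' z.2)%R)%:E =
   \int[P]_w (h w)%:E * \int[P]_w (h' w)%:E)%E.
Proof.
move=> mh mh' h0 h'0.
have mf : measurable_fun setT (fun z : (T * T)%type => ((h z.1 * h' z.2)%R)%:E).
  apply/measurable_EFinP; apply: measurable_funM.
    exact: measurableT_comp mh measurable_fst.
  exact: measurableT_comp mh' measurable_snd.
rewrite (fubini_tonelli1 _ mf); last by move=> z; rewrite lee_fin mulr_ge0.
transitivity (\int[P]_x ((h x)%:E * \int[P]_w (h' w)%:E))%E.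
  apply: eq_integral => x _; rewrite /fubini_F /=.
  under eq_integral do rewrite EFinM.
  by rewrite ge0_integralZl_EFin //; try (by move=> y _; rewrite lee_fin);
    try (exact/measurable_EFinP).
rewrite ge0_integralZr //; try (by move=> x _; rewrite lee_fin);
  try (exact/measurable_EFinP); by apply: integral_ge0 => y _; rewrite lee_fin.
Qed.

Lemma swap_int (f : (T * T)%type -> \bar R) : measurable_fun setT f ->
  (forall z, 0 <= f z)%E ->
  (\int[P \x P]_z f (z.2, z.1) = \int[P \x P]_z f z)%E.
Proof.
move=> mf f0.
have mfs : measurable_fun setT (fun z : (T * T)%type => f (z.2, z.1)).
  apply: measurableT_comp mf _.
  exact: measurable_fun_pair measurable_snd measurable_fst.
by rewrite (fubini_tonelli1 _ mfs) // (fubini_tonelli2 f mf f0).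
Qed.

Lemma main_ineq k : (forall w, 0 <= S i w) ->
  (\int[P]_w ((S i w * gg k.+1 (S i w))%R)%:E * \int[P]_w (gg k (S i w))%:E <=
   \int[P]_w ((S i w * gg k (S i w))%R)%:E * \int[P]_w (gg k.+1 (S i w))%:E)%E.
Proof.
move=> X0.
pose u := gg k; pose v := gg k.+1.
have mX := Smeas i.
have mu' : measurable_fun setT (u \o S i) := measurableT_comp (gg_meas k) mX.
have mv : measurable_fun setT (v \o S i) := measurableT_comp (gg_meas k.+1) mX.
have u0 : forall s, 0 <= u s by move=> s; exact: fine_ge0.
have v0 : forall s, 0 <= v s by move=> s; exact: fine_ge0.
have mXu : measurable_fun setT (fun w => S i w * u (S i w)) by exact: measurable_funM.
have mXv : measurable_fun setT (fun w => S i w * v (S i w)) by exact: measurable_funM.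
pose f1 := fun z : (T * T)%type => ((S i z.1 * u (S i z.1) * v (S i z.2))%R)%:E.
pose f2 := fun z : (T * T)%type => ((S i z.1 * v (S i z.1) * u (S i z.2))%R)%:E.
have mf1 : measurable_fun setT f1.
  apply/measurable_EFinP; apply: measurable_funM.
    exact: measurableT_comp mXu measurable_fst.
  exact: measurableT_comp mv measurable_snd.
have mf2 : measurable_fun setT f2.
  apply/measurable_EFinP; apply: measurable_funM.
    exact: measurableT_comp mXv measurable_fst.
  exact: measurableT_comp mu' measurable_snd.
have f10 : forall z, (0 <= f1 z)%E by move=> z; rewrite lee_fin !mulr_ge0.
have f20 : forall z, (0 <= f2 z)%E by move=> z; rewrite lee_fin !mulr_ge0.
have E1 : (\int[P \x P]_z f1 z =
    \int[P]_w ((S i w * u (S i w))%R)%:E * \int[P]_w (v (S i w))%:E)%E.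
  rewrite -prod_int //; by move=> w; rewrite ?mulr_ge0.
have E2 : (\int[P \x P]_z f2 z =
    \int[P]_w ((S i w * v (S i w))%R)%:E * \int[P]_w (u (S i w))%:E)%E.
  rewrite -prod_int //; by move=> w; rewrite ?mulr_ge0.
rewrite -/u -/v -E1 -E2.
have mf1s : measurable_fun setT (fun z : (T * T)%type => f1 (z.2, z.1)).
  apply: measurableT_comp mf1 _.
  exact: measurable_fun_pair measurable_snd measurable_fst.
have mf2s : measurable_fun setT (fun z : (T * T)%type => f2 (z.2, z.1)).
  apply: measurableT_comp mf2 _.
  exact: measurable_fun_pair measurable_snd measurable_fst.
have key : (\int[P \x P]_z (f2 z + f2 (z.2, z.1)) <=
            \int[P \x P]_z (f1 z + f1 (z.2, z.1)))%E.
  apply: ge0_le_integral => //; try (by move=> z _; rewrite adde_ge0);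
    try exact: emeasurable_funD.
  move=> [x y] _; rewrite /f1 /f2 /= -!EFinD lee_fin.
    set a := S i x; set b := S i y.
    have h1 : b <= a -> v a * u b <= u a * v b by move=> ba; exact: gg_tp2.
    have h2 : a <= b -> v b * u a <= u b * v a by move=> ab; exact: gg_tp2.
    have ua := u0 a; have ub := u0 b; have va := v0 a; have vb := v0 b.
    rewrite -subr_ge0.
    have -> : a * u a * v b + b * u b * v a - (a * v a * u b + b * v b * u a) =
      (a - b) * (u a * v b - v a * u b) by ring.
    case: (leP b a) => hab.
      by apply: mulr_ge0; rewrite subr_ge0 // h1.
    apply: mulr_le0; rewrite subr_le0; first exact: ltW.
    by rewrite [u a * _]mulrC [v a * _]mulrC h2 // ltW.
move: key; rewrite !ge0_integralD //; try exact: mf1s; try exact: mf2s;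
  try (by move=> z _; exact: f10); try (by move=> z _; exact: f20).
rewrite !swap_int //.
move=> h; rewrite leNgt; apply/negP => lt21.
move: h; rewrite leNgt => /negP; apply.
by apply: lteD.
Qed.

Lemma rank_cnt t : rank S i t = (cnt O (S i t) t).+1.
Proof.
rewrite /rank /cnt /O add1n; congr _.+1.
rewrite count_filter cardE size_filter enumT; apply: eq_count => l /=.
rewrite andbC; apply/idP/idP => [/set_mem /= -> // | h]; exact: mem_set.
Qed.

Lemma A_meas j : measurable [set w | cnt O (S i w) w = j].
Proof.
apply: (@count_meas _ _ (fun l w => S i w < S l w)) => l _.
rewrite (_ : [set w | S i w < S l w] = setT `&` (fun w => S l w - S i w) @^-1` `]0, +oo[%classic).
  by apply: measurable_funB => //; exact: measurable_itv.
by apply/seteqP; split=> x /=; rewrite in_itv /= andbT subr_gt0 //; case.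
Qed.

Lemma P_cnt j : P [set w | cnt O (S i w) w = j] = (\int[P]_w (gg j (S i w))%:E)%E.
Proof.
rewrite -[X in P X]setIT -integral_indic //; last exact: A_meas.
transitivity (\int[P]_w (((fun=> 1 : R) (S i w) * \1_[set w | cnt O (S i w) w = j] w)%R)%:E)%E.
  by apply: eq_integral => w _; rewrite mul1r.
etransitivity; first exact: (transfer (fun=> 1) j (measurable_cst _) (fun=> ler01)).
by apply: eq_integral => w _; rewrite mul1r.
Qed.

Lemma int_cnt j : (forall w, 0 <= S i w) ->
  (\int[P]_(w in [set w | cnt O (S i w) w = j]) (S i w)%:E =
   \int[P]_w ((S i w * gg j (S i w))%R)%:E)%E.
Proof.
move=> X0; rewrite integral_mkcond.
transitivity (\int[P]_w ((`|S i w| * \1_[set w | cnt O (S i w) w = j] w)%R)%:E)%E.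
  apply: eq_integral => w _; rewrite /patch indicE ger0_norm //.
  by case: (w \in _); rewrite ?mulr1 ?mulr0.
have mn : measurable_fun setT (fun x : R => `|x|) by exact: normr_measurable.
etransitivity; first exact: (transfer (fun x : R => `|x|) j mn (fun x => normr_ge0 x)).
by apply: eq_integral => w _; rewrite ger0_norm.
Qed.

Lemma final k : (forall w, 0 <= S i w) ->
  P.-integrable setT (fun t => (S i t)%:E) -> (1 <= k)%N ->
  (0 < P [set t | rank S i t = k])%E -> (0 < P [set t | rank S i t = k.+1])%E ->
  cond_exp_event P (S i) [set t | rank S i t = k.+1] <=
  cond_exp_event P (S i) [set t | rank S i t = k].
Proof.
case: k => [//|k] X0 Xint _ hPk hPk1.
have Ek : [set t | rank S i t = k.+1] = [set w | cnt O (S i w) w = k].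
  by apply/seteqP; split => t /=; rewrite rank_cnt; [case|move=> ->].
have Ek1 : [set t | rank S i t = k.+2] = [set w | cnt O (S i w) w = k.+1].
  by apply/seteqP; split => t /=; rewrite rank_cnt; [case|move=> ->].
have bfin j : (\int[P]_w ((S i w * gg j (S i w))%R)%:E)%E \is a fin_num.
  rewrite -int_cnt // ge0_fin_numE; last by apply: integral_ge0 => w _; rewrite lee_fin.
  apply: (@le_lt_trans _ _ (\int[P]_(w in setT) (S i w)%:E)%E).
    apply: ge0_subset_integral => //; try exact: A_meas;
      try (exact/measurable_EFinP); by move=> w _; rewrite lee_fin.
  have /integrableP[_ h] := Xint.
  apply: le_lt_trans h; apply: ge0_le_integral => //;
    try (by move=> w _; rewrite lee_fin); try (exact/measurable_EFinP);
    try (by move=> w _; rewrite abse_ge0);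
    try (by apply: measurableT_comp => //; exact/measurable_EFinP);
    try (by move=> w _; rewrite gee0_abs // lee_fin).
have afin j : (\int[P]_w (gg j (S i w))%:E)%E \is a fin_num.
  by rewrite -P_cnt; apply: P_fin; exact: A_meas.
rewrite /cond_exp_event Ek Ek1 !int_cnt // !P_cnt.
move: hPk hPk1; rewrite Ek Ek1 !P_cnt => hPk hPk1.
have := main_ineq k X0.
rewrite -(fineK (bfin k)) -(fineK (bfin k.+1)) -(fineK (afin k)) -(fineK (afin k.+1)).
rewrite -!EFinM lee_fin => h.
move: hPk hPk1; rewrite -(fineK (afin k)) -(fineK (afin k.+1)) !lte_fin => hPk hPk1.
rewrite ler_pdivrMr // mulrAC ler_pdivlMr //.
Qed.

End Main.

Theorem theorem2 (d : measure_display) (T : measurableType d) (R : realType)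
  (P : probability T R) (m : nat) (hm : (2 <= m)%N)
  (S : 'I_m -> T -> R)
  (Smeas : forall j, measurable_fun setT (S j))
  (Sindep : mutually_independent P S)
  (Snonneg : forall j t, 0 <= S j t)
  (Sdens : forall j, has_density_on_nonneg P (S j))
  (Sint : forall j, P.-integrable setT (fun t => (S j t)%:E))
  (i : 'I_m) (hi : (i.+1 <= m - 1)%N)
  (k : nat) (hk1 : (1 <= k)%N) (hk2 : (k <= m - 1)%N)
  (hPk : (0 < P [set t | rank S i t = k])%E)
  (hPk1 : (0 < P [set t | rank S i t = k.+1])%E) :
  cond_exp_event P (S i) [set t | rank S i t = k] >=
  cond_exp_event P (S i) [set t | rank S i t = k.+1].
Proof.
exact: (@final d T R P m S Smeas Sindep i k (Snonneg i) (Sint i) hk1 hPk hPk1).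
Qed.
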